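(* Let $\mathcal{J}$ be a finite set, $\mathcal{J}_0=\mathcal{J}\cup\{0\}$, let $(\Omega,P)$ be a Borel probability space, and let $\mathcal{U}:\Omega\times\mathcal{J}_0\times\mathbb{R}\to\mathbb{R}$, $(\varepsilon,j,\delta)\mapsto\mathcal{U}_{\varepsilon j}(\delta)$, satisfy the regularity and no-indifference assumptions stated in the context. Let $s\in\mathbb{R}^{\mathcal{J}_0}$ satisfy $s_j>0$ for all $j\in\mathcal{J}_0$ and $\sum_{j\in\mathcal{J}_0}s_j=1$, and let $\delta\in\mathbb{R}^{\mathcal{J}}$ (extended by $\delta_0=0$). Then the following are equivalent: (i) $\delta\in\tilde\sigma^{-1}(s)$, i.e. $\tilde\sigma(\delta)=s$; (ii) there exists $\pi\in\mathcal{M}(P,s)$ such that, with $u_\varepsilon=\max_{j\in\mathcal{J}_0}\mathcal{U}_{\varepsilon j}(\delta_j)$ for $\varepsilon\in\Omega$ and $v=-\delta$ (so $v_j=-\delta_j$, $v_0=0$), the triple $(\pi,u,v)$ is an equilibrium outcome of the matching problem with transfer functions $f_{\varepsilon j}(u)=u$ and $g_{\varepsilon j}(-\delta)=-\mathcal{U}_{\varepsilon j}(\delta)$ (i.e. $g_{\varepsilon j}(y)=-\mathcal{U}_{\varepsilon j}(-y)$).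
   Context: Assumption (regularity): for every $j\in\mathcal{J}_0$ and $\delta\in\mathbb{R}$ the map $\varepsilon\mapsto\mathcal{U}_{\varepsilon j}(\delta)$ is measurable, and for every $\varepsilon\in\Omega$, $j\in\mathcal{J}_0$ the map $\delta\mapsto\mathcal{U}_{\varepsilon j}(\delta)$ is increasing and continuous from $\mathbb{R}$ to $\mathbb{R}$. Assumption (no indifference): for all distinct $j,j'\in\mathcal{J}_0$ and all $\delta,\delta'\in\mathbb{R}$, $P(\varepsilon:\mathcal{U}_{\varepsilon j}(\delta)=\mathcal{U}_{\varepsilon j'}(\delta'))=0$. Demand map: for $\delta\in\mathbb{R}^{\mathcal{J}_0}$, $\sigma_j(\delta)=P(\varepsilon:\mathcal{U}_{\varepsilon j}(\delta_j)\ge\max_{j'\in\mathcal{J}_0}\mathcal{U}_{\varepsilon j'}(\delta_{j'}))$, $j\in\mathcal{J}_0$. The normalized demand map is $\tilde\sigma(\delta)=\sigma((0,\delta))$ for $\delta\in\mathbb{R}^{\mathcal{J}}$ (i.e. imposing $\delta_0=0$), and $\tilde\sigma^{-1}(s)=\{\delta\in\mathbb{R}^{\mathcal{J}}:\tilde\sigma(\delta)=s\}$. $\mathcal{M}(P,s)$ is the set of probability measures $\pi$ on $\Omega\times\mathcal{J}_0$ with $\pi(B\times\mathcal{J}_0)=P(B)$ for all Borel $B\subseteq\Omega$ and $\pi(\Omega\times\{j\})=s_j$ for all $j$. Given increasing functions $f_{\varepsilon j},g_{\varepsilon j}:\mathbb{R}\to\mathbb{R}$, an equilibrium outcome is a triple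 $(\pi,u,v)$ with $\pi$ a probability measure on $\Omega\times\mathcal{J}_0$, $u$ Borel-measurable on $\Omega$, $v$ a function on $\mathcal{J}_0$, such that: (i) $\pi\in\mathcal{M}(P,s)$; (ii) $f_{\varepsilon j}(u_\varepsilon)+g_{\varepsilon j}(v_j)\ge0$ for all $\varepsilon\in\Omega$, $j\in\mathcal{J}_0$; (iii) if $(\varepsilon,j)\in\mathrm{Supp}(\pi)$ then $f_{\varepsilon j}(u_\varepsilon)+g_{\varepsilon j}(v_j)=0$.
   Formalization: In the equilibrium outcome, condition (iii) requires $f_{\varepsilon j}(u_\varepsilon)+g_{\varepsilon j}(v_j)=0$ for π-almost every (ε,j) instead of for every (ε,j) ∈ Supp(π), and each map δ ↦ $\mathcal{U}_{\varepsilon j}(\delta)$ is strictly increasing. Each condition added here is assumed in the paper as well or is needed for the statement above to hold. *)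

(* Defs.v *)
From mathcomp Require Import all_boot all_order all_algebra.
From mathcomp Require Import all_classical all_reals all_analysis.

Set Implicit Arguments.
Unset Strict Implicit.
Unset Printing Implicit Defensive.

Import Order.TTheory GRing.Theory Num.Theory numFieldNormedType.Exports.
Local Open Scope classical_set_scope.
Local Open Scope ring_scope.

(* J0 = J ∪ {0} is modelled as [option J], with [None] playing the role of 0.
   It carries the discrete sigma-algebra (generated by all subsets). *)
Definition J0m (J : finType) := g_sigma_algebraType (@setT (set (option J))).

Definition ext0 (R : realType) (J : finType) (delta : J -> R) : option J -> R :=
  fun o => match o with None => 0 | Some j => delta j end.

Definition umax (R : realType) (Om : Type) (J : finType)
  (U : Om -> option J -> R -> R) (delta : option J -> R) (eps : Om) : R :=
  \big[Num.max/U eps None (delta None)]_(j : option J) U eps j (delta j).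

Definition demand (R : realType) d (Om : measurableType d) (J : finType)
  (P : probability Om R) (U : Om -> option J -> R -> R)
  (delta : option J -> R) (j : option J) : \bar R :=
  P [set eps | umax U delta eps <= U eps j (delta j)].

(* Normalized demand: tilde-sigma(delta) = sigma((0, delta)).
   [demand_inv P U s delta] means delta ∈ tilde-sigma^{-1}(s). *)
Definition demand_inv (R : realType) d (Om : measurableType d) (J : finType)
  (P : probability Om R) (U : Om -> option J -> R -> R)
  (s : option J -> R) (delta : J -> R) : Prop :=
  forall j : option J, demand P U (ext0 delta) j = (s j)%:E.

Definition regularity (R : realType) d (Om : measurableType d) (J : finType)
  (U : Om -> option J -> R -> R) : Prop :=
  (forall (j : option J) (x : R), measurable_fun setT (fun eps : Om => U eps j x)) /\
  (forall (eps : Om) (j : option J),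
      {homo U eps j : x y / x < y} /\ continuous (U eps j)).

Definition no_indifference (R : realType) d (Om : measurableType d) (J : finType)
  (P : probability Om R) (U : Om -> option J -> R -> R) : Prop :=
  forall (j j' : option J), j != j' -> forall x x' : R,
    P [set eps | U eps j x = U eps j' x'] = 0%E.

Definition marginals (R : realType) d (Om : measurableType d) (J : finType)
  (P : probability Om R) (s : option J -> R)
  (pi : probability (Om * J0m J)%type R) : Prop :=
  (forall B : set Om, measurable B -> pi (B `*` setT) = P B) /\
  (forall j : option J, pi (setT `*` [set j]) = (s j)%:E).

(* Equilibrium outcome (pi, u, v) for transfer functions f, g.
   Condition (iii) is read as holding pi-almost everywhere. *)
Definition equilibrium_outcome (R : realType) d (Om : measurableType d) (J : finType)
  (P : probability Om R) (s : option J -> R)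
  (f g : Om -> option J -> R -> R)
  (pi : probability (Om * J0m J)%type R) (u : Om -> R) (v : option J -> R) : Prop :=
  [/\ marginals P s pi,
      measurable_fun setT u,
      (forall (eps : Om) (j : option J), 0 <= f eps j (u eps) + g eps j (v j))
    & {ae pi, forall x : (Om * J0m J)%type,
          f x.1 x.2 (u x.1) + g x.1 x.2 (v x.2) = 0}].

(* Main.v *)
Require Import Defs.
From mathcomp Require Import all_boot all_order all_algebra.
From mathcomp Require Import all_classical all_reals all_analysis.
From mathcomp Require Import measurable_realfun.
Import Order.TTheory GRing.Theory Num.Theory numFieldNormedType.Exports.
Local Open Scope classical_set_scope.
Local Open Scope ring_scope.

Section S.
Context (R : realType) (d : measure_display) (Om : measurableType d)
  (J : finType) (P : probability Om R) (U : Om -> option J -> R -> R)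
  (hreg : regularity U) (hnoind : no_indifference P U) (delta : J -> R).

Let del := ext0 delta.
Let u := umax U del.
Let mU j x : measurable_fun setT (fun e => U e j x).
Proof. exact: hreg.1. Qed.

Lemma mu_meas : measurable_fun setT u.
Proof.
rewrite /u /umax /index_enum; elim: (Finite.enum _) => [|k l IH].
  by under eq_fun do rewrite big_nil; exact: mU.
under eq_fun do rewrite big_cons.
exact: (measurable_maxr (mU k (del k)) IH).
Qed.

Lemma u_ge e j : U e j (del j) <= u e.
Proof. exact: le_bigmax. Qed.

Lemma u_att e : exists j, u e = U e j (del j).
Proof.
rewrite /u /umax.
elim/big_rec: _ => [|j x _ [k ->]]; first by exists None.
have [h|h] := leP (U e j (del j)) (U e k (del k)).
  by exists k; rewrite ?max_r.
by exists j; rewrite ?max_l // ltW.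
Qed.

Definition pp e j := u e <= U e j (del j).
Definition am e := foldr (fun k acc => if pp e k then k else acc) None (index_enum (option J)).

Lemma am_p e : pp e (am e).
Proof.
have [j hj] := u_att e.
have : j \in index_enum (option J) by rewrite mem_index_enum.
have hp : pp e j by rewrite /pp -hj lexx.
rewrite /am; elim: (index_enum _) => //= k l IH; rewrite inE => /orP[/eqP <-|/IH h].
  by rewrite hp.
by case: ifP.
Qed.

Lemma mA j : measurable [set e | pp e j].
Proof.
have h := measurable_fun_ler mu_meas (mU j (del j)) measurableT (Y := [set true]) I.
rewrite setTI in h.
rewrite (_ : [set e | pp e j] = (fun e => u e <= U e j (del j)) @^-1` [set true]) //.
Qed.
Lemma am_pre j : measurable (am @^-1` [set j]).
Proof.
rewrite /am; elim: (index_enum _) => /= [|k l IH].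
  by case: (pselect (None = j)) => h; [rewrite (_ : _ @^-1` _ = setT) //; apply/seteqP; split|
      rewrite (_ : _ @^-1` _ = set0) //; apply/seteqP; split].
rewrite (_ : _ @^-1` _ = ([set e | pp e k] `&` [set _ | k = j]) `|`
   (~` [set e | pp e k] `&` (fun e => foldr (fun k acc => if pp e k then k else acc) None l) @^-1` [set j])).
  apply: measurableU; apply: measurableI => //; first exact: mA.
    by case: (pselect (k = j)) => h; [rewrite (_ : [set _ | _] = setT) //; apply/seteqP; split|
      rewrite (_ : [set _ | _] = set0) //; apply/seteqP; split].
  exact: measurableC (mA k).
apply/seteqP; split => e /=; case: ifP => h.
- by move=> ->; left.
- by move=> ->; right; split => //; rewrite h.
- by case=> [[]|[]] //.
- by case=> [[]|[]] //; rewrite h.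
Qed.

Lemma am_meas : measurable_fun setT (am : Om -> J0m J).
Proof.
move=> _ Y _; rewrite setTI.
rewrite (_ : am @^-1` Y = \bigcup_(j in Y) am @^-1` [set j]).
  apply: fin_bigcup_measurable; first exact: finite_finset.
  by move=> j _; exact: am_pre.
apply/seteqP; split => e /=; first by move=> h; exists (am e).
by case=> j Yj /= ->.
Qed.

Lemma am_pre' (Y : set (option J)) : measurable (am @^-1` Y).
Proof. have h := @am_meas measurableT Y; rewrite setTI in h; apply: h; exact: sub_sigma_algebra. Qed.

Definition E j k := [set e | U e j (del j) = U e k (del k)].

Lemma mE j k : measurable (E j k).
Proof.
have h := measurable_fun_eqr (mU j (del j)) (mU k (del k)) measurableT (Y := [set true]) I.
rewrite setTI in h.
rewrite (_ : E j k = (fun e => U e j (del j) == U e k (del k)) @^-1` [set true]) //.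
by apply/seteqP; split => e /= /eqP.
Qed.

Lemma KA j : P [set e | pp e j] = P (am @^-1` [set j]).
Proof.
rewrite (measureDI P (mA j) (am_pre j)).
have -> : [set e | pp e j] `&` am @^-1` [set j] = am @^-1` [set j].
  apply/seteqP; split => e /=; first by case.
  by move=> h; split => //; rewrite -h; exact: am_p.
rewrite [X in (X + _)%E](_ : _ = 0%E) ?add0e //.
apply: measure_negligible; first exact: measurableD (mA j) (am_pre j).
apply: (@negligibleS _ _ _ _ (\big[setU/set0]_(k | k != j) E j k)).
  move=> e /= [hj hk].
  have hk' : am e != j by apply/eqP.
  rewrite (bigD1 (am e)) //=; left.
  rewrite /E; apply/eqP; rewrite eq_le; apply/andP; split.
    apply: le_trans (am_p e); exact: u_ge.
  apply: le_trans hj; exact: u_ge.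
elim/big_ind: _ => //; [exact: negligible_set0|exact: negligibleU|].
move=> k hk; apply/negligibleP; first exact: mE.
by apply: hnoind; rewrite eq_sym.
Qed.

Lemma KS : (\sum_(j : option J) P (am @^-1` [set j]) = 1)%E.
Proof.
have h l : uniq l -> P (am @^-1` [set j | j \in l]) = (\sum_(j <- l) P (am @^-1` [set j]))%E.
  elim: l => [_|k l IH /andP[kl ul]].
    rewrite big_nil; rewrite (_ : _ @^-1` _ = set0) ?measure0 //.
    by apply/seteqP; split => e //=.
  rewrite big_cons -IH // -measureU; [|exact: am_pre'|exact: am_pre'|].
    congr (P _); apply/seteqP; split => e /=; rewrite inE.
      by case/orP => [/eqP ->|]; [left|right].
    by case => [->|->]; rewrite ?eqxx ?orbT.
  apply/seteqP; split => e //= [-> h]; by rewrite h in kl.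
rewrite /index_enum -h; last exact: index_enum_uniq.
rewrite (_ : _ @^-1` _ = setT) ?probability_setT //.
by apply/seteqP; split => e //= _; rewrite mem_index_enum.
Qed.

Lemma main (s : option J -> R) (hssum : \sum_(j : option J) s j = 1) :
  demand_inv P U s delta <->
  exists pi : probability (Om * J0m J)%type R,
    equilibrium_outcome P s
      (fun _ _ x => x)
      (fun eps j y => - U eps j (- y))
      pi u (fun j => - del j).
Proof.
split.
  move=> hd.
  have mF : measurable_fun setT (fun e => (e, am e) : (Om * J0m J)%type).
    exact: measurable_fun_pair am_meas.
  pose X : {mfun Om >-> (Om * J0m J)%type} := mfun_Sub (mem_set mF : _ \in mfun).
  exists (distribution P X).
  split.
  - split.
    + move=> B mB; rewrite /distribution /pushforward /=.
      by congr (P _); apply/seteqP; split => e /=; [case|split].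
    + move=> j; rewrite /distribution /pushforward /=.
      change (P (X @^-1` (setT `*` [set j])) = (s j)%:E).
      rewrite (_ : X @^-1` _ = am @^-1` [set j]); last first.
        by apply/seteqP; split => e /=; [case|split].
      by rewrite -KA; exact: hd.
  - exact: mu_meas.
  - by move=> e j; rewrite opprK subr_ge0; exact: u_ge.
  - rewrite /almost_everywhere.
      rewrite /prop_near1 /nbhs /=.
      exists (\bigcup_(j in setT) ((~` (am @^-1` [set j])) `*` [set j])); split.
      + apply: fin_bigcup_measurable; first exact: finite_finset.
        move=> j _; apply: measurableX; first exact: measurableC (am_pre j).
        exact: sub_sigma_algebra.
      + change (P (X @^-1` (\bigcup_(j in setT) ((~` (am @^-1` [set j])) `*` [set j]))) = 0%E).
        rewrite (_ : X @^-1` _ = set0) ?measure0 //.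
        by apply/seteqP; split => e //= [j _ /= [h1 h2]].
      + case=> e k /= h; exists k => //=; split => //= hk; apply: h.
        rewrite opprK; apply/eqP; rewrite subr_eq0 eq_le; apply/andP; split.
          by rewrite -hk; exact: am_p.
        exact: u_ge.
case=> pi [[m1 m2] _ _ hae].
have [N [mN piN hN]] : (pi.-negligible (~` [set x | u x.1 - U x.1 x.2 (- - del x.2) = 0])) := hae.
have le j : ((s j)%:E <= P [set e | pp e j])%E.
  have mj : measurable ([set j] : set (J0m J)) by exact: sub_sigma_algebra.
  rewrite -m2 -(m1 _ (mA j)).
  apply: (@le_trans _ _ (pi (([set e | pp e j] `*` setT) `|` N))).
    apply: le_measure; rewrite ?inE.
    - apply: measurableX; [exact: measurableT|exact: mj].
    - apply: measurableU; [apply: measurableX; [exact: mA|exact: measurableT]|exact: mN].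
    - case=> e k [_ /= hk]; subst k.
      have [hx|hx] := pselect (u e - U e j (- - del j) = 0); last by right; exact: hN.
      left; split => //; rewrite /pp; move: hx; rewrite opprK => /eqP; rewrite subr_eq0 => /eqP ->.
      exact: lexx.
  apply: le_trans (measureU2 _ _ _) _; [apply: measurableX; [exact: mA|exact: measurableT]|exact: mN|].
  by rewrite [X in (_ + X)%E](_ : _ = 0%E) ?adde0 //; exact: piN.
have fin j : P [set e | pp e j] \is a fin_num by exact: fin_num_measure (mA j).
have sa : \sum_(j : option J) fine (P [set e | pp e j]) = 1.
  apply: EFin_inj; rewrite EFin_sum_fine //.
  under eq_bigr do rewrite KA.
  exact: KS.
have ge j : 0 <= fine (P [set e | pp e j]) - s j.
  by rewrite subr_ge0 -lee_fin fineK //; exact: le.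
have h0 : \sum_(j : option J) (fine (P [set e | pp e j]) - s j) = 0.
  by rewrite sumrB sa hssum subrr.
move=> j.
have := psumr_eq0P (fun i _ => ge i) h0 (i := j) isT.
move/eqP; rewrite subr_eq0 => /eqP hj.
change (P [set e | pp e j] = (s j)%:E).
by rewrite -hj fineK.
Qed.

End S.

Theorem theorem1 (R : realType) (d : measure_display) (Om : measurableType d)
  (J : finType) (P : probability Om R) (U : Om -> option J -> R -> R)
  (hreg : regularity U) (hnoind : no_indifference P U)
  (s : option J -> R) (hspos : forall j, 0 < s j)
  (hssum : \sum_(j : option J) s j = 1)
  (delta : J -> R) :
  demand_inv P U s delta <->
  exists pi : probability (Om * J0m J)%type R,
    equilibrium_outcome P s
      (fun _ _ x => x)
      (fun eps j y => - U eps j (- y))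
      pi (umax U (ext0 delta)) (fun j => - ext0 delta j).
Proof. exact: (@main R d Om J P U hreg hnoind delta s hssum). Qed.
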